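(* Let $a=\frac{1+\sqrt{5}}{2}$ and $b=a^2=a+1$, and write $a_n=[an]$ and $b_n=[bn]$. Then the series $$\sum_{n=1}^\infty \left(\frac{a_{n+1}}{a_n}-\frac{b_{n+1}}{b_n}\right)$$ converges.
   Context: $[x]$ denotes the greatest integer not exceeding $x$. *)

(* Defs.v *)
From Stdlib Require Import Reals.
From Coquelicot Require Import Coquelicot.
Open Scope R_scope.

(* [x] = greatest integer not exceeding x (Stdlib's Int_part is exactly the floor). *)
Definition floorR (x : R) : R := IZR (Int_part x).

Definition phi : R := (1 + sqrt 5) / 2.
Definition aa : R := phi.
Definition bb : R := phi ^ 2.

Definition a_seq (n : nat) : R := floorR (aa * INR n).
Definition b_seq (n : nat) : R := floorR (bb * INR n).

(* term of the series, indexed from n = 1: u k = f (k+1) *)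
Definition term (n : nat) : R :=
  a_seq (n + 1) / a_seq n - b_seq (n + 1) / b_seq n.

(* Main.v *)
Require Import Defs.
From Stdlib Require Import Reals.
From Coquelicot Require Import Coquelicot.
From Stdlib Require Import Lra Psatz.
Open Scope R_scope.

Lemma core c N r1 r2: 1<c -> 1<=N -> 0<=r1<1 -> 0<=r2<1 ->
 Rabs ((c*(N+1) - r2)/(c*N - r1) - 1 - 1/N - (r1 - r2)/(c*N)) <= 2*(c+1)/((c-1)*c) / (N*(N+1)).
Proof.
  intros Hc HN H1 H2.
  assert (Hx : (c-1)*N <= c*N - r1) by nra.
  assert (Hx0 : 0 < (c-1)*N) by nra.
  replace ((c*(N+1) - r2)/(c*N - r1) - 1 - 1/N - (r1 - r2)/(c*N))
    with (((c + r1 - r2)*r1) / ((c*N - r1)*c*N)) by (field; lra).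
  assert (HA : 0 <= (c + r1 - r2)*r1 <= c+1) by nra.
  assert (HB : (c-1)*N*c*N <= (c*N - r1)*c*N).
  { apply Rmult_le_compat_r; [lra|]. apply Rmult_le_compat_r; lra. }
  assert (HB0 : 0 < (c-1)*N*c*N) by (apply Rmult_lt_0_compat; nra).
  rewrite Rabs_pos_eq.
  2:{ unfold Rdiv; apply Rmult_le_pos; [lra|]. left; apply Rinv_0_lt_compat; lra. }
  apply Rle_trans with ((c+1)/((c-1)*N*c*N)).
  - unfold Rdiv. apply Rmult_le_compat; try lra.
    + left; apply Rinv_0_lt_compat; lra.
    + apply Rinv_le_contravar; lra.
  - replace ((c+1)/((c-1)*N*c*N)) with (2*(c+1)/((c-1)*c) / (N*(N+N))) by (field; lra).
    unfold Rdiv. apply Rmult_le_compat_l.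
    + apply Rmult_le_pos; [lra|]. left; apply Rinv_0_lt_compat; nra.
    + apply Rinv_le_contravar; nra.
Qed.
Lemma inv_lim : is_lim_seq (fun k => / INR (S k)) 0.
Proof.
  apply (is_lim_seq_inv (fun k => INR (S k)) p_infty).
  - apply (is_lim_seq_incr_1 INR p_infty). exact is_lim_seq_INR.
  - discriminate.
Qed.

Lemma tele (f : nat -> R) (C : R) :
  (forall k, Rabs (f k) <= C / INR (S k)) -> ex_series (fun k => f k - f (S k)).
Proof.
  intros H. exists (f 0%nat - 0).
  assert (L : is_lim_seq (fun N => f (S N)) 0).
  { apply is_lim_seq_le_le with (u := fun N => - (C * / INR (S (S N)))) (w := fun N => C * / INR (S (S N))).
    - intros n. specialize (H (S n)). unfold Rdiv in H. apply Rabs_le_between in H. lra.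
    - assert (E : Rbar_opp (Rbar_mult C 0) = Finite 0) by (simpl; f_equal; ring). rewrite <- E.
      apply (proj1 (is_lim_seq_opp (fun N => C * / INR (S (S N))) _)). apply (is_lim_seq_scal_l (fun N => / INR (S (S N)))).
      apply (is_lim_seq_incr_1 (fun k => / INR (S k))). exact inv_lim.
    - assert (E : Rbar_mult C 0 = Finite 0) by (simpl; f_equal; ring). rewrite <- E.
      apply is_lim_seq_scal_l.
      apply (is_lim_seq_incr_1 (fun k => / INR (S k))). exact inv_lim. }
  change (is_lim_seq (sum_n (fun k => f k - f (S k))) (f 0%nat - 0)).
  apply is_lim_seq_ext with (u := fun N => f 0%nat - f (S N)).
  - intros N. induction N.
    + rewrite sum_O. reflexivity.
    + rewrite sum_Sn, <- IHN. unfold plus; simpl. ring.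
  - apply is_lim_seq_minus'. apply is_lim_seq_const. exact L.
Qed.


Definition xs (c : R) (m : nat) : R := floorR (c * INR m).
Definition rs (c : R) (m : nat) : R := c * INR m - xs c m.

Lemma rs_bounds c m : 0 <= rs c m < 1.
Proof.
  unfold rs, xs, floorR. destruct (base_Int_part (c * INR m)). lra.
Qed.

Definition Mc (c : R) := 2*(c+1)/((c-1)*c).

Lemma step c k : 1 < c ->
  let N := INR (S k) in
  Rabs (xs c (S (S k)) / xs c (S k) - 1 - 1/N - (rs c (S k) - rs c (S (S k)))/(c*N))
   <= Mc c / (N*(N+1)).
Proof.
  intros Hc N.
  assert (HN : 1 <= N) by (unfold N; rewrite S_INR; pose proof (pos_INR k); lra).
  assert (E1 : xs c (S k) = c*N - rs c (S k)) by (unfold rs, N; ring).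
  assert (E2 : xs c (S (S k)) = c*(N+1) - rs c (S (S k))) by (unfold rs, N; rewrite (S_INR (S k)); ring).
  rewrite E1, E2. apply core; auto using rs_bounds.
Qed.

Lemma phi_gt1 : 1 < phi.
Proof.
  unfold phi. assert (1 < sqrt 5).
  { rewrite <- sqrt_1. apply sqrt_lt_1; lra. }
  lra.
Qed.

Definition hh (m : nat) := rs aa m / aa - rs bb m / bb.

Theorem theorem1 : ex_series (fun k : nat => term (S k)).
Proof.
  assert (Ha : 1 < aa) by exact phi_gt1.
  assert (Hb : 1 < bb) by (unfold bb; pose proof phi_gt1; simpl; nra).
  assert (Hh : forall m, Rabs (hh m) <= 1).
  { intros m. unfold hh. destruct (rs_bounds aa m), (rs_bounds bb m).
    assert (0 <= rs aa m / aa < 1).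
    { split. apply Rmult_le_pos; [lra| left; apply Rinv_0_lt_compat; lra].
      apply Rmult_lt_reg_r with aa; [lra|]. unfold Rdiv. rewrite Rmult_assoc, Rinv_l; lra. }
    assert (0 <= rs bb m / bb < 1).
    { split. apply Rmult_le_pos; [lra| left; apply Rinv_0_lt_compat; lra].
      apply Rmult_lt_reg_r with bb; [lra|]. unfold Rdiv. rewrite Rmult_assoc, Rinv_l; lra. }
    apply Rabs_le; lra. }
  set (f := fun k => hh (S k) / INR (S k)).
  set (K := Mc aa + Mc bb + 1).
  set (W := fun k => term (S k) - (f k - f (S k))).
  assert (HT1 : ex_series (fun k => f k - f (S k))).
  { apply (tele f 1). intros k. unfold f, Rdiv. rewrite Rabs_mult, Rmult_1_l.
    rewrite (Rabs_pos_eq (/ _)). 2:{ left; apply Rinv_0_lt_compat, lt_0_INR; lia. }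
    specialize (Hh (S k)). pose proof (Rinv_0_lt_compat (INR (S k)) (lt_0_INR _ (Nat.lt_0_succ k))). nra. }
  assert (HW : ex_series W).
  { apply (ex_series_le W (fun k => K / INR (S k) - K / INR (S (S k)))).
    2:{ apply (tele (fun k => K / INR (S k)) K). intros k.
        assert (0 <= K).
        { unfold K, Mc. assert (0 < 2*(aa+1)/((aa-1)*aa)).
          { apply Rdiv_lt_0_compat; nra. }
          assert (0 < 2*(bb+1)/((bb-1)*bb)) by (apply Rdiv_lt_0_compat; nra). lra. }
        rewrite Rabs_pos_eq. lra. apply Rmult_le_pos; [lra|]. left; apply Rinv_0_lt_compat, lt_0_INR; lia. }
    intros k. change (norm (W k)) with (Rabs (W k)).
    pose proof (step aa k Ha) as SA. pose proof (step bb k Hb) as SB. cbv zeta in SA, SB.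
    set (N := INR (S k)) in *.
    assert (HN : 1 <= N) by (unfold N; rewrite S_INR; pose proof (pos_INR k); lra).
    assert (HN2 : INR (S (S k)) = N + 1) by (unfold N; rewrite (S_INR (S k)); ring).
    rewrite HN2.
    set (Ea := xs aa (S (S k)) / xs aa (S k) - 1 - 1/N - (rs aa (S k) - rs aa (S (S k)))/(aa*N)) in *.
    set (Eb := xs bb (S (S k)) / xs bb (S k) - 1 - 1/N - (rs bb (S k) - rs bb (S (S k)))/(bb*N)) in *.
    assert (WE : W k = Ea - Eb - hh (S (S k)) / (N*(N+1))).
    { unfold W, f, term, Ea, Eb, hh. fold N. rewrite HN2.
      replace (S k + 1)%nat with (S (S k)) by lia.
      change (a_seq (S (S k))) with (xs aa (S (S k))).
      change (a_seq (S k)) with (xs aa (S k)).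
      change (b_seq (S (S k))) with (xs bb (S (S k))).
      change (b_seq (S k)) with (xs bb (S k)).
      generalize (xs aa (S (S k)) / xs aa (S k)) (xs bb (S (S k)) / xs bb (S k)).
      intros qa qb. field. repeat split; lra. }
    rewrite WE.
    assert (Hq : Rabs (hh (S (S k)) / (N*(N+1))) <= 1/(N*(N+1))).
    { unfold Rdiv. rewrite Rabs_mult, (Rabs_pos_eq (/ _)).
      2:{ left; apply Rinv_0_lt_compat; nra. }
      apply Rmult_le_compat_r; [left; apply Rinv_0_lt_compat; nra| apply Hh]. }
    eapply Rle_trans. apply Rabs_triang.
    eapply Rle_trans. apply Rplus_le_compat_r. apply Rabs_triang.
    rewrite Rabs_Ropp, Rabs_Ropp.
    replace (K / N - K / (N+1)) with (Mc aa / (N*(N+1)) + Mc bb / (N*(N+1)) + 1/(N*(N+1))).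
    2:{ unfold K. field. lra. }
    lra. }
  apply (ex_series_ext (fun k => plus (f k - f (S k)) (W k))).
  - intros k. unfold W, plus; simpl. ring.
  - exact (@ex_series_plus R_AbsRing R_NormedModule _ _ HT1 HW).
Qed.
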